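(* Let $X\sim \mathcal{UNB}(r,p)$, i.e. $X$ has probability mass function $p(x)=\frac{q^{x} p^r}{1+x} \binom{r+x-1}{x} {}_2F_1(1, r+x; 2+x; q)$ for $x=0,1,2,\dots$. Then the cumulative distribution function of $X$ is \[ F_X(x)= F_Y(x)+ \frac{r+x}{x+2}\binom{r+x-1}{x} p^r q^{x+1}\, {}_2F_1\left(1,r+x+1;x+3;q\right), \] where $F_Y$ is the cumulative distribution function of $Y\sim \mathcal{NB}(r,p)$.
   Context: Parameters $r>0$, $0<p<1$, $q=1-p$. The Uniform-negative binomial distribution $\mathcal{UNB}(r,p)$ is defined by the stochastic representation $X\mid N\sim$ discrete uniform on $\{0,1,\dots,N\}$ and $N\sim \mathcal{NB}(r,p)$, the negative binomial distribution with probability mass function $P(N=n)=\binom{r+n-1}{n}p^r q^n$, $n=0,1,2,\dots$. The Gauss hypergeometric function is ${}_2F_1(a,b;c;z)=\sum_{n=0}^\infty \frac{(a)_n(b)_n}{(c)_n}\frac{z^n}{n!}$ for $|z|<1$, with $(a)_n$ the Pochhammer symbol (rising factorial). *)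

(* Defs.v *)
From Stdlib Require Import Reals.
From Coquelicot Require Import Coquelicot.
Open Scope R_scope.

Fixpoint poch (a : R) (n : nat) : R :=
  match n with
  | O => 1
  | S m => poch a m * (a + INR m)
  end.

(* Generalized binomial coefficient  binom(r+n-1, n) = (r)_n / n!. *)
Definition binom_neg (r : R) (n : nat) : R := poch r n / INR (Factorial.fact n).

Definition nb_pmf (r p : R) (n : nat) : R :=
  binom_neg r n * Rpower p r * (1 - p) ^ n.

Definition hyp2F1 (a b c z : R) : R :=
  Series (fun n => poch a n * poch b n / poch c n * z ^ n / INR (Factorial.fact n)).

(* Uniform-negative binomial pmf, from the stochastic representation
   X | N ~ Uniform{0..N}, N ~ NB(r,p):
   P(X = x) = sum_{n >= x} P(N = n) / (n + 1). *)
Definition unb_pmf (r p : R) (x : nat) : R :=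
  Series (fun k => nb_pmf r p (x + k) / INR (x + k + 1)).

Definition unb_cdf (r p : R) (x : nat) : R := sum_f_R0 (unb_pmf r p) x.
Definition nb_cdf (r p : R) (x : nat) : R := sum_f_R0 (nb_pmf r p) x.

(* Main.v *)
Require Import Defs.
From Stdlib Require Import Reals Lra Lia.
From Coquelicot Require Import Coquelicot.
Open Scope R_scope.

Lemma poch_pos a n : 0 < a -> 0 < poch a n.
Proof. intro Ha; induction n; simpl. lra. apply Rmult_lt_0_compat; auto. pose proof (pos_INR n); lra. Qed.

Lemma lim_inv_n1 : is_lim_seq (fun n => / (INR n + 1)) 0.
Proof.
  assert (H : is_lim_seq (fun n => INR n + 1) p_infty).
  { eapply is_lim_seq_plus. apply is_lim_seq_INR. apply is_lim_seq_const.
    simpl. reflexivity. }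
  apply is_lim_seq_inv in H; [|discriminate]. exact H.
Qed.

Lemma nb_pos r p n : 0 < r -> 0 < p -> p < 1 -> 0 < nb_pmf r p n.
Proof.
  intros. unfold nb_pmf, binom_neg. apply Rmult_lt_0_compat. apply Rmult_lt_0_compat.
  apply Rdiv_lt_0_compat. now apply poch_pos. apply INR_fact_lt_0.
  unfold Rpower; apply exp_pos. apply pow_lt; lra.
Qed.

Lemma nb_ex r p : 0 < r -> 0 < p -> p < 1 -> ex_series (nb_pmf r p).
Proof.
  intros hr hp0 hp1.
  assert (H := ex_series_DAlembert (nb_pmf r p) (1 - p)).
  eapply ex_series_ext; [|apply H].
  - intro n; simpl. apply Rabs_pos_eq. left; now apply nb_pos.
  - lra.
  - intro n; apply Rgt_not_eq, nb_pos; auto.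
  - apply is_lim_seq_ext with (fun n => (1 + (r - 1) * / (INR n + 1)) * (1 - p)).
    + intro n. rewrite Rabs_pos_eq.
      * unfold nb_pmf, binom_neg. change (poch r (S n)) with (poch r n * (r + INR n)). change (Factorial.fact (S n)) with (S n * Factorial.fact n)%nat. rewrite mult_INR, S_INR. change ((1-p)^(S n)) with ((1-p)*(1-p)^n).
        pose proof (pos_INR n). pose proof (INR_fact_lt_0 n). pose proof (poch_pos r n hr).
        assert (0 < Rpower p r) by (unfold Rpower; apply exp_pos).
        assert (0 < (1-p)^n) by (apply pow_lt; lra).
        field. repeat split; lra.
      * left; apply Rdiv_lt_0_compat; now apply nb_pos.
    + assert (L : is_lim_seq (fun n => (1 + (r - 1) * / (INR n + 1)) * (1 - p)) ((1 + (r-1)*0) * (1-p))).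
      { apply is_lim_seq_mult'. apply is_lim_seq_plus'. apply is_lim_seq_const.
        apply is_lim_seq_mult'. apply is_lim_seq_const. apply lim_inv_n1. apply is_lim_seq_const. }
      replace ((1 + (r-1)*0) * (1-p)) with (1-p) in L by ring. exact L.
Qed.

Lemma poch_add a n m : poch a (n + m) = poch a n * poch (a + INR n) m.
Proof.
  induction m.
  - rewrite Nat.add_0_r; simpl; ring.
  - rewrite Nat.add_succ_r; simpl poch. rewrite IHm, plus_INR. ring.
Qed.

Lemma poch1 m : poch 1 m = INR (Factorial.fact m).
Proof.
  induction m. reflexivity.
  change (poch 1 (S m)) with (poch 1 m * (1 + INR m)).
  change (Factorial.fact (S m)) with (S m * Factorial.fact m)%nat.
  rewrite mult_INR, S_INR, IHm. ring.
Qed.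

Lemma fact_add n m : INR (Factorial.fact (n + m)) = INR (Factorial.fact n) * poch (INR n + 1) m.
Proof.
  induction m.
  - rewrite Nat.add_0_r; simpl; ring.
  - rewrite Nat.add_succ_r.
    change (Factorial.fact (S (n + m))) with (S (n + m) * Factorial.fact (n + m))%nat.
    change (poch (INR n + 1) (S m)) with (poch (INR n + 1) m * (INR n + 1 + INR m)).
    rewrite mult_INR, S_INR, IHm, plus_INR. ring.
Qed.

Lemma poch_shift a m : poch a m * (a + INR m) = a * poch (a + 1) m.
Proof.
  change (poch a m * (a + INR m)) with (poch a (S m)).
  replace (S m) with (1 + m)%nat by lia. rewrite poch_add. simpl. ring_simplify. reflexivity.
Qed.

Lemma unb_ex r p k : 0 < r -> 0 < p -> p < 1 ->
  ex_series (fun j => nb_pmf r p (k + j) / INR (k + j + 1)).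
Proof.
  intros hr hp0 hp1.
  apply (@ex_series_le R_AbsRing R_CompleteNormedModule) with (fun j => nb_pmf r p (k + j)).
  - intro n. change norm with Rabs. simpl.
    pose proof (nb_pos r p (k+n) hr hp0 hp1).
    assert (1 <= INR (k + n + 1)) by (rewrite plus_INR; simpl; pose proof (pos_INR (k+n)); lra).
    rewrite Rabs_pos_eq.
    + unfold Rdiv. rewrite <- (Rmult_1_r (nb_pmf r p (k+n))) at 2.
      apply Rmult_le_compat_l. lra. rewrite <- Rinv_1. apply Rinv_le_contravar; lra.
    + left; apply Rdiv_lt_0_compat; lra.
  - apply (ex_series_incr_n (nb_pmf r p)). now apply nb_ex.
Qed.

Lemma unb_step r p k : 0 < r -> 0 < p -> p < 1 ->
  unb_pmf r p k = nb_pmf r p k / INR (k + 1) + unb_pmf r p (S k).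
Proof.
  intros hr hp0 hp1. unfold unb_pmf at 1.
  rewrite Series_incr_1 by now apply unb_ex.
  rewrite Nat.add_0_r. f_equal. unfold unb_pmf. apply Series_ext. intro n.
  now rewrite Nat.add_succ_r.
Qed.

Lemma main_ind r p x : 0 < r -> 0 < p -> p < 1 ->
  unb_cdf r p x = nb_cdf r p x + INR (x + 1) * unb_pmf r p (S x).
Proof.
  intros hr hp0 hp1. induction x.
  - unfold unb_cdf, nb_cdf; simpl. rewrite (unb_step r p 0) by auto. simpl. field.
  - unfold unb_cdf, nb_cdf in *. simpl sum_f_R0. rewrite IHx.
    rewrite (unb_step r p (S x)) by auto.
    assert (0 < INR (S x + 1)) by (apply lt_0_INR; lia).
    assert (E : INR (S x + 1) = INR (x + 1) + 1) by (rewrite !plus_INR, S_INR; ring). rewrite E in *.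
    field. lra.
Qed.

Lemma term_eq r p x m : 0 < r -> 0 < p -> p < 1 ->
  INR (x + 1) * (nb_pmf r p (S x + m) / INR (S x + m + 1)) =
  (r + INR x) / (INR x + 2) * binom_neg r x * Rpower p r * (1 - p) ^ (x + 1)
  * (poch 1 m * poch (r + INR x + 1) m / poch (INR x + 3) m * (1 - p) ^ m
     / INR (Factorial.fact m)).
Proof.
  intros hr hp0 hp1.
  rewrite poch1.
  assert (A : poch r (S x + m) = poch r x * (r + INR x) * poch (r + INR x + 1) m).
  { replace (S x + m)%nat with (x + (1 + m))%nat by lia.
    rewrite poch_add, poch_add. simpl. ring_simplify. reflexivity. }
  assert (B : INR (Factorial.fact (S x + m)) = INR (Factorial.fact x) * (INR x + 1) * poch (INR x + 2) m).
  { replace (S x + m)%nat with (x + (1 + m))%nat by lia.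
    rewrite fact_add, poch_add. replace (INR x + 1 + INR 1) with (INR x + 2) by (simpl; ring).
    simpl. ring. }
  assert (C : poch (INR x + 3) m = (INR x + 2 + INR m) * poch (INR x + 2) m / (INR x + 2)).
  { pose proof (poch_shift (INR x + 2) m) as H.
    replace (INR x + 2 + 1) with (INR x + 3) in H by ring.
    pose proof (pos_INR x). apply (Rmult_eq_reg_l (INR x + 2)); [|lra].
    rewrite <- H. field. lra. }
  assert (D : INR (S x + m + 1) = INR x + 2 + INR m) by (rewrite !plus_INR, S_INR; simpl; ring).
  assert (D2 : INR (x + 1) = INR x + 1) by (rewrite plus_INR; simpl; ring).
  unfold nb_pmf, binom_neg. rewrite A, B, C, D, D2.
  replace (S x + m)%nat with (x + 1 + m)%nat by lia. rewrite pow_add.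
  pose proof (pos_INR x). pose proof (pos_INR m). pose proof (INR_fact_lt_0 x).
  pose proof (INR_fact_lt_0 m). pose proof (poch_pos (INR x + 2) m ltac:(lra)).
  pose proof (poch_pos (r + INR x + 1) m ltac:(lra)).
  field. repeat split; lra.
Qed.

Theorem theorem3 (r p : R) (hr : 0 < r) (hp0 : 0 < p) (hp1 : p < 1) (x : nat) :
  unb_cdf r p x =
  nb_cdf r p x
  + (r + INR x) / (INR x + 2) * binom_neg r x * Rpower p r * (1 - p) ^ (x + 1)
    * hyp2F1 1 (r + INR x + 1) (INR x + 3) (1 - p).
Proof.
  rewrite main_ind by auto. f_equal.
  unfold hyp2F1, unb_pmf. rewrite <- !Series_scal_l. apply Series_ext. intro m.
  now apply term_eq.
Qed.
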